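(* Fix a nonnegative integer $n$ and define \[ R_n(a,b,c)=(1-a)_n(b)_n\,{}_4F_3\!\left(\left.{-n,a,a-c-n,c \atop \frac{a-n}{2},\frac{1+a-n}{2},b}\right| \frac{1}{4}\right). \] The group of transformations of $(a,b,c)$ generated by $(a,b,c)\mapsto(a,b,a-c-n)$ and $(a,b,c)\mapsto(1+c-b,1+c-a,c)$, both of which leave $R_n$ invariant, is isomorphic to $S_3$, and yields the six invariances (valid whenever both sides are defined) \begin{align*} R_n(a,b,c)&=R_n(a,b,c)=R_n(a,b,a-c-n)=R_n(1+c-b,1+c-a,c)=R_n(1+c-b,1+c-a,1-b-n)\\ &=R_n(1+a-b-c-n,1-c-n,a-c-n)=R_n(1+a-b-c-n,1-c-n,1-b-n). \end{align*} Moreover the function \[ V_n(x,y,z)=R_n\!\left(x-y-z,\ \frac{2+3x-y-z-n}{2},\ \frac{x+y-3z-n}{2}\right) \] is invariant under all six permutations of $x,y,z$.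
   Context: For $a\in\mathbb{C}$, $(a)_0=1$ and $(a)_k=a(a+1)\cdots(a+k-1)$ for $k\ge1$. The hypergeometric series is ${}_rF_s\!\left(\left.{\alpha_1,\ldots,\alpha_r\atop \beta_1,\ldots,\beta_s}\right|z\right)=\sum_{k\ge0}\frac{(\alpha_1)_k\cdots(\alpha_r)_k}{k!(\beta_1)_k\cdots(\beta_s)_k}z^k$, with no lower parameter zero or a negative integer; when an upper parameter is $-n$ it is a finite sum over $0\le k\le n$. *)

(* Defs.v *)
From HB Require Import structures.
From mathcomp Require Import all_boot all_order all_fingroup all_algebra.
From mathcomp Require Import complex.
From mathcomp Require Import reals.
Set Implicit Arguments. Unset Strict Implicit. Unset Printing Implicit Defensive.
Import Order.TTheory GRing.Theory Num.Theory.
Local Open Scope ring_scope.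
Local Open Scope complex_scope.

Section Defs.
Variable R : realType.
Local Notation C := R[i].

Definition poch (a : C) (k : nat) : C := \prod_(i < k) (a + i%:R).

(* When an upper parameter is -N
   this is exactly the rFs series of the paper (all further terms vanish). *)
Definition hypT (N : nat) (us ls : seq C) (z : C) : C :=
  \sum_(k < N.+1)
     (\prod_(u <- us) poch u k) / (k`!%:R * \prod_(l <- ls) poch l k) * z ^+ k.

Definition nonpos_int (a : C) : Prop := exists m : nat, a = - m%:R.

Definition lower_ok (ls : seq C) : Prop := forall l, l \in ls -> ~ nonpos_int l.

Definition lowerR (n : nat) (a b c : C) : seq C :=
  [:: (a - n%:R) / 2; (1 + a - n%:R) / 2; b].

Definition Rn (n : nat) (a b c : C) : C :=
  poch (1 - a) n * poch b n *
  hypT n [:: - n%:R; a; a - c - n%:R; c] (lowerR n a b c) (1 / 4).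

Definition Rn_def (n : nat) (a b c : C) : Prop := lower_ok (lowerR n a b c).

Definition Vargs (n : nat) (x y z : C) : C * C * C :=
  (x - y - z, (2 + 3 * x - y - z - n%:R) / 2, (x + y - 3 * z - n%:R) / 2).

Definition Vn (n : nat) (x y z : C) : C :=
  let: (a, b, c) := Vargs n x y z in Rn n a b c.

Definition Vn_def (n : nat) (x y z : C) : Prop :=
  let: (a, b, c) := Vargs n x y z in Rn_def n a b c.

Definition T1 (n : nat) (t : C * C * C) : C * C * C :=
  let: (a, b, c) := t in (a, b, a - c - n%:R).
Definition T2 (n : nat) (t : C * C * C) : C * C * C :=
  let: (a, b, c) := t in (1 + c - b, 1 + c - a, c).

(* The group generated by T1 and T2 under composition.  Since T1, T2 are
   involutions, the generated monoid is the generated group. *)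
Inductive gen_T (n : nat) : (C * C * C -> C * C * C) -> Prop :=
  | gen_id : gen_T n id
  | gen_1 g : gen_T n g -> gen_T n (T1 n \o g)
  | gen_2 g : gen_T n g -> gen_T n (T2 n \o g).

End Defs.

(* Main.v *)
Require Import Defs.
From HB Require Import structures.
From mathcomp Require Import all_boot all_order all_fingroup all_algebra.
From mathcomp Require Import complex.
From mathcomp Require Import reals.
From mathcomp Require Import ring zify.
From Stdlib Require Import FunctionalExtensionality.
Import Order.TTheory GRing.Theory Num.Theory.
Local Open Scope ring_scope.
Local Open Scope complex_scope.
Set Implicit Arguments. Unset Strict Implicit.

Section Aux.
Variable R : realType.
Local Notation C := R[i].
Implicit Types (x y u v w a b c : C).

Lemma poch0 x : poch x 0 = 1.
Proof. by rewrite /poch big_ord0. Qed.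

Lemma pochS x k : poch x k.+1 = poch x k * (x + k%:R).
Proof. by rewrite /poch big_ord_recr. Qed.

Lemma pochSl x k : poch x k.+1 = x * poch (x + 1) k.
Proof.
rewrite /poch big_ord_recl /= addr0; congr (_ * _).
apply: eq_bigr => i _; rewrite /bump /= add1n -addn1 natrD; ring.
Qed.

Lemma poch_add x m p : poch x (m + p) = poch x m * poch (x + m%:R) p.
Proof.
elim: p => [|p IH]; first by rewrite addn0 poch0 mulr1.
by rewrite addnS !pochS IH natrD -mulrA addrA.
Qed.

Lemma poch_refl x m : poch (1 - x - m%:R) m = (-1) ^+ m * poch x m.
Proof.
elim: m x => [|m IH] x; first by rewrite !poch0 expr0 mulr1.
rewrite pochSl pochS.
have -> : 1 - x - m.+1%:R + 1 = 1 - x - m%:R by rewrite -addn1 natrD; ring.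
rewrite IH exprS; ring.
Qed.

Lemma poch_dup x y k : y = 1 + x ->
  poch (x / 2) k * poch (y / 2) k * 4 ^+ k = poch x (k + k).
Proof.
move=> ->; elim: k => [|k IH]; first by rewrite !poch0 expr0 !mulr1.
rewrite addSn addnS !pochS -IH exprS.
have -> : (k + k)%:R = 2 * k%:R :> C by rewrite natrD; ring.
have -> : (k + k).+1%:R = 2 * k%:R + 1 :> C by rewrite -addn1 !natrD; ring.
by field.
Qed.

Lemma poch_neq0 (l : C) k : ~ nonpos_int l -> poch l k != 0.
Proof.
move=> H; elim: k => [|k IH]; first by rewrite poch0 oner_neq0.
rewrite pochS mulf_neq0 //; apply/eqP => E; apply: H; exists k.
by apply/eqP; rewrite -addr_eq0 E.
Qed.

Lemma poch_nat1 m : poch (1 : C) m = m`!%:R.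
Proof.
elim: m => [|m IH]; first by rewrite poch0.
by rewrite pochS IH factS natrM -addn1 natrD; ring.
Qed.

Lemma poch_negn n k : (k <= n)%N ->
  poch (- n%:R : C) k = (-1) ^+ k * 'C(n, k)%:R * k`!%:R.
Proof.
move=> kn.
have E : poch (- n%:R : C) k = (-1) ^+ k * poch ((n - k)%:R + 1) k.
  transitivity (poch (1 - ((n - k)%:R + 1 : C) - k%:R) k); last exact: poch_refl.
  congr poch; rewrite natrB //; ring.
have F : n`!%:R = (n - k)`!%:R * poch ((n - k)%:R + 1) k :> C.
  by rewrite -!poch_nat1 -{1}(subnK kn) poch_add addrC.
have B : 'C(n, k)%:R * (k`!%:R * (n - k)`!%:R) = n`!%:R :> C.
  by rewrite -!natrM bin_fact.
have nz : (n - k)`!%:R != 0 :> C by rewrite pnatr_eq0 -lt0n fact_gt0.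
apply: (mulIf nz); rewrite E.
have -> : (-1) ^+ k * 'C(n, k)%:R * k`!%:R * (n - k)`!%:R
   = (-1) ^+ k * ('C(n, k)%:R * (k`!%:R * (n - k)`!%:R)) :> C by ring.
rewrite B F; ring.
Qed.


Lemma poch_vand x y m :
  poch (x + y) m = \sum_(j < m.+1) 'C(m, j)%:R * poch x j * poch y (m - j).
Proof.
elim: m => [|m IH].
  by rewrite big_ord1 /= !poch0 bin0; ring.
transitivity (\sum_(j < m.+1) 'C(m, j)%:R * poch x j.+1 * poch y (m - j)
            + \sum_(j < m.+1) 'C(m, j)%:R * poch x j * poch y (m.+1 - j)).
  rewrite pochS IH mulr_suml -big_split; apply: eq_bigr => j _ /=.
  have jm : (j <= m)%N by rewrite -ltnS.
  rewrite subSn // !pochS natrB //; ring.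
rewrite [in RHS]big_ord_recl [X in _ + X = _]big_ord_recl /= !bin0 !subn0 !poch0.
rewrite addrCA; congr (_ + _).
under [RHS]eq_bigr => i _ do rewrite /bump /= add1n binS natrD subSS mulrDl mulrDl.
rewrite big_split /= addrC; congr (_ + _).
rewrite big_ord_recr /= bin_small // mul0r mul0r addr0.
by apply: eq_bigr => i _; rewrite /bump /= add1n subSS.
Qed.


Definition Fs n u v w := \sum_(k < n.+1) 'C(n, k)%:R * poch u k * poch v k
   * poch w (n - k) * poch (u + v + (k + k)%:R) (n - k).

Definition Hs n u v w := \sum_(k < n.+1) \sum_(j < n.+1)
  (if (k + j <= n)%N then ('C(n, k) * 'C(n - k, j))%:R * poch u (k + j)
      * poch v (n - j) * poch w (n - k) else 0).

Lemma F_H n u v w : Fs n u v w = Hs n u v w.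
Proof.
apply: eq_bigr => k _.
have kn : (k <= n)%N by rewrite -ltnS.
have -> : u + v + (k + k)%:R = (u + k%:R) + (v + k%:R) by rewrite natrD; ring.
rewrite poch_vand mulr_sumr.
rewrite (big_ord_widen n.+1 (fun j => 'C(n, k)%:R * poch u k * poch v k * poch w (n - k) *
  ('C(n - k, j)%:R * poch (u + k%:R) j * poch (v + k%:R) (n - k - j)))) ?ltnS ?leq_subr //.
rewrite big_mkcond.
apply: eq_bigr => j _.
have -> : (j < (n - k).+1)%N = (k + j <= n)%N by apply/idP/idP; lia.
case: ifP => // H.
have -> : (n - j = k + (n - k - j))%N by lia.
rewrite !poch_add natrM; ring.
Qed.

Lemma binC2 n k j : (k + j <= n)%N ->
  ('C(n, k) * 'C(n - k, j) = 'C(n, j) * 'C(n - j, k))%N.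
Proof.
move=> H.
have P : (0 < k`! * j`! * (n - k - j)`!)%N by rewrite !muln_gt0 !fact_gt0.
apply/eqP; rewrite -(eqn_pmul2r P); apply/eqP.
have e1 : (n - k - j = n - j - k)%N by lia.
have L : ('C(n, k) * 'C(n - k, j) * (k`! * j`! * (n - k - j)`!) = n`!)%N.
  rewrite -(bin_fact (_ : k <= n)%N); last by lia.
  rewrite -(bin_fact (_ : j <= n - k)%N); last by lia.
  ring.
have L2 : ('C(n, j) * 'C(n - j, k) * (k`! * j`! * (n - k - j)`!) = n`!)%N.
  rewrite -(bin_fact (_ : j <= n)%N); last by lia.
  rewrite -(bin_fact (_ : k <= n - j)%N); last by lia.
  rewrite e1; ring.
by rewrite L L2.
Qed.

Lemma H_sym n u v w : Hs n u v w = Hs n u w v.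
Proof.
rewrite /Hs exchange_big /=; apply: eq_bigr => k _; apply: eq_bigr => j _.
rewrite addnC; case: ifP => // H.
rewrite binC2; last by rewrite addnC.
ring.
Qed.

Lemma F_sym12 n u v w : Fs n u v w = Fs n v u w.
Proof. apply: eq_bigr => k _; rewrite (addrC u v); ring. Qed.

Lemma F_sym23 n u v w : Fs n u v w = Fs n u w v.
Proof. by rewrite !F_H H_sym. Qed.


Lemma Rn_F n a b c : Rn_def n a b c ->
  Rn n a b c = Fs n c (a - c - n%:R) (1 - b - n%:R).
Proof.
move=> Hd.
have nzl : forall l, l \in lowerR n a b c -> forall k, poch l k != 0.
  by move=> l Hl k; apply: poch_neq0; apply: Hd.
rewrite /Rn /hypT /Fs mulr_sumr; apply: eq_bigr => k _.
have kn : (k <= n)%N by rewrite -ltnS.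
rewrite /lowerR !big_cons !big_nil !mulr1.
set p1 := poch ((a - n%:R) / 2) k.
set p2 := poch ((1 + a - n%:R) / 2) k.
have n1 : p1 != 0 by apply: nzl; rewrite !inE eqxx.
have n2 : p2 != 0 by apply: nzl; rewrite !inE eqxx ?orbT.
have n3 : poch b k != 0 by apply: nzl; rewrite !inE eqxx ?orbT.
have n4 : k`!%:R != 0 :> C by rewrite pnatr_eq0 -lt0n fact_gt0.
have E1 : poch (1 - a) n = (-1) ^+ n * poch (a - n%:R) n.
  transitivity (poch (1 - (a - n%:R) - n%:R) n); last exact: poch_refl.
  congr poch; ring.
have E4 : poch b n = poch b k * poch (b + k%:R) (n - k).
  by rewrite -poch_add subnKC.
have E5 : poch (b + k%:R) (n - k) = (-1) ^+ (n - k) * poch (1 - b - n%:R) (n - k).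
  transitivity (poch (1 - (1 - b - n%:R) - (n - k)%:R) (n - k)); last exact: poch_refl.
  congr poch; rewrite natrB //; ring.
have E2 : poch (a - n%:R) n * poch a k
    = poch (a - n%:R) (k + k) * poch (a - n%:R + (k + k)%:R) (n - k).
  rewrite -poch_add.
  have -> : (k + k + (n - k) = n + k)%N by lia.
  rewrite poch_add; congr (_ * poch _ _); ring.
have E3 : p1 * p2 * 4 ^+ k = poch (a - n%:R) (k + k).
  by apply: poch_dup; ring.
have Es : (-1) ^+ n * ((-1) ^+ (n - k) * (-1) ^+ k) = 1 :> C.
  by rewrite -exprD subnK // -exprMn mulrNN mulr1 expr1n.
have Ez : (1 / 4) ^+ k * 4 ^+ k = 1 :> C.
  by rewrite -exprMn mul1r mulVf ?expr1n // pnatr_eq0.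
have -> : c + (a - c - n%:R) + (k + k)%:R = a - n%:R + (k + k)%:R by ring.
set Q := poch (a - n%:R + (k + k)%:R) (n - k).
set D := k`!%:R * (p1 * (p2 * poch b k)).
have Dnz : D != 0 by rewrite !mulf_neq0.
apply: (mulIf Dnz).
have -> : poch (1 - a) n * poch b n *
   (poch (- n%:R) k * (poch a k * (poch (a - c - n%:R) k * poch c k)) / D * (1 / 4) ^+ k) * D
   = poch (1 - a) n * poch b n *
   (poch (- n%:R) k * (poch a k * (poch (a - c - n%:R) k * poch c k)) * (1 / 4) ^+ k).
  by field.
rewrite E1 E4 E5 poch_negn //.
transitivity ((-1) ^+ n * ((-1) ^+ (n - k) * (-1) ^+ k) * 'C(n, k)%:R * k`!%:R * poch b k
   * poch (1 - b - n%:R) (n - k) * poch (a - c - n%:R) k * poch c k * (1 / 4) ^+ k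
   * (poch (a - n%:R) n * poch a k)).
  ring.
rewrite E2 -E3 -/Q.
transitivity (((-1) ^+ n * ((-1) ^+ (n - k) * (-1) ^+ k)) * ((1 / 4) ^+ k * 4 ^+ k) *
   ('C(n, k)%:R * k`!%:R * poch b k * poch (1 - b - n%:R) (n - k) * poch (a - c - n%:R) k
    * poch c k * p1 * p2 * Q)).
  ring.
rewrite Es Ez /D; ring.
Qed.


Lemma Fs_args n u v w u' v' w' : u = u' -> v = v' -> w = w' ->
  Fs n u v w = Fs n u' v' w'.
Proof. by move=> -> -> ->. Qed.

Lemma F_p13 n u v w : Fs n u v w = Fs n w v u.
Proof. by rewrite F_sym12 F_sym23 F_sym12. Qed.
Lemma F_p231 n u v w : Fs n u v w = Fs n v w u.
Proof. by rewrite F_sym12 F_sym23. Qed.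
Lemma F_p312 n u v w : Fs n u v w = Fs n w u v.
Proof. by rewrite F_sym23 F_sym12. Qed.

Definition phi n (t : C * C * C) : C * C * C :=
  let: (a, b, c) := t in (c, a - c - n%:R, 1 - b - n%:R).
Definition psi n (t : C * C * C) : C * C * C :=
  let: (u, v, w) := t in (u + v + n%:R, 1 - w - n%:R, u).
Definition coord (t : C * C * C) (i : 'I_3) : C :=
  match nat_of_ord i with 0 => t.1.1 | 1 => t.1.2 | _ => t.2 end.
Definition o0 : 'I_3 := @Ordinal 3 0 isT.
Definition o1 : 'I_3 := @Ordinal 3 1 isT.
Definition o2 : 'I_3 := @Ordinal 3 2 isT.
Definition Pm (s : 'S_3) (t : C * C * C) : C * C * C :=
  (coord t (s o0), coord t (s o1), coord t (s o2)).
Definition fT n (s : 'S_3) := psi n \o Pm s \o phi n.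

Lemma ord3 (j : 'I_3) : j = o0 \/ j = o1 \/ j = o2.
Proof.
case: j => [[|[|[|m]]] H].
- by left; apply/val_inj.
- by right; left; apply/val_inj.
- by right; right; apply/val_inj.
- by [].
Qed.

Lemma phi_psi n t : phi n (psi n t) = t.
Proof. case: t => [[u v] w] /=; congr (_, _, _); ring. Qed.
Lemma psi_phi n t : psi n (phi n t) = t.
Proof. case: t => [[a b] c] /=; congr (_, _, _); ring. Qed.

Lemma coord_Pm s t j : coord (Pm s t) j = coord t (s j).
Proof. by case: (ord3 j) => [->|[->|->]]. Qed.

Lemma Pm_mul s t p : Pm (s * t)%g p = Pm s (Pm t p).
Proof. by rewrite /Pm !coord_Pm !permM. Qed.

Lemma fT_mul n s t : fT n (s * t)%g =1 fT n s \o fT n t.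
Proof. by move=> p; rewrite /fT /comp phi_psi Pm_mul. Qed.

Lemma coord_nat j : coord (0%:R, 1%:R, 2%:R) j = (nat_of_ord j)%:R.
Proof. by case: (ord3 j) => [->|[->|->]]. Qed.

Lemma fT_inj n s t : fT n s =1 fT n t -> s = t.
Proof.
move=> H; have := H (psi n (0%:R, 1%:R, 2%:R)).
rewrite /fT /comp phi_psi => /(congr1 (phi n)); rewrite !phi_psi /Pm.
rewrite !coord_nat => -[E0 E1 E2].
apply/permP => j; apply/val_inj/eqP; rewrite -(eqr_nat C).
by case: (ord3 j) => [->|[->|->]]; apply/eqP.
Qed.

Lemma pair3 (x1 x2 x3 y1 y2 y3 : C) : x1 = y1 -> x2 = y2 -> x3 = y3 ->
  (x1, x2, x3) = (y1, y2, y3).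
Proof. by move=> -> -> ->. Qed.

Lemma fT_t1 n : fT n (tperm o0 o1) =1 T1 n.
Proof.
move=> [[a b] c]; rewrite /fT /= /Pm tpermL tpermR tpermD //.
rewrite /coord /=; apply: pair3; ring.
Qed.

Lemma fT_t2 n : fT n (tperm o1 o2) =1 T2 n.
Proof.
move=> [[a b] c]; rewrite /fT /= /Pm tpermL tpermR tpermD //.
rewrite /coord /=; apply: pair3; ring.
Qed.

Lemma fT_1 n : fT n 1%g =1 id.
Proof. move=> [[a b] c]; rewrite /fT /= /Pm !perm1 /coord /=; apply: pair3; ring. Qed.


Lemma gen_ext n (g h : C * C * C -> C * C * C) :
  gen_T n g -> g =1 h -> gen_T n h.
Proof. by move=> Hg E; have <- : g = h by apply: functional_extensionality. Qed.

Ltac ptw E0 E1 E2 := move=> [[a b] c]; rewrite /fT /comp /Pm /coord E0 E1 E2 /=;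
  apply: pair3; ring.

Lemma fT_gen n s : gen_T n (fT n s).
Proof.
have bad : forall i j, i != j -> nat_of_ord (s i) = nat_of_ord (s j) -> False.
  by move=> i j /negP Hij /val_inj /perm_inj E; apply: Hij; rewrite E.
move: (ltn_ord (s o0)) (ltn_ord (s o1)) (ltn_ord (s o2)).
case E0 : (nat_of_ord (s o0)) => [|[|[|m]]] // _;
case E1 : (nat_of_ord (s o1)) => [|[|[|m']]] // _;
case E2 : (nat_of_ord (s o2)) => [|[|[|m'']]] // _;
try (by exfalso; apply: (bad o0 o1 isT); rewrite E0 E1);
try (by exfalso; apply: (bad o0 o2 isT); rewrite E0 E2);
try (by exfalso; apply: (bad o1 o2 isT); rewrite E1 E2).
all: first
  [ apply: (gen_ext (gen_id R n)); by ptw E0 E1 E2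
  | apply: (gen_ext (gen_1 (gen_id R n))); by ptw E0 E1 E2
  | apply: (gen_ext (gen_2 (gen_id R n))); by ptw E0 E1 E2
  | apply: (gen_ext (gen_1 (gen_2 (gen_id R n)))); by ptw E0 E1 E2
  | apply: (gen_ext (gen_2 (gen_1 (gen_id R n)))); by ptw E0 E1 E2
  | apply: (gen_ext (gen_1 (gen_2 (gen_1 (gen_id R n))))); by ptw E0 E1 E2 ].
Qed.

Lemma fT_surj n g : gen_T n g -> exists s, fT n s =1 g.
Proof.
elim=> [|h _ [s Hs]|h _ [s Hs]].
- by exists 1%g; apply: fT_1.
- exists (tperm o0 o1 * s)%g => p; rewrite fT_mul /comp Hs; exact: fT_t1.
- exists (tperm o1 o2 * s)%g => p; rewrite fT_mul /comp Hs; exact: fT_t2.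
Qed.

End Aux.

Ltac fperm := first
  [ apply: Fs_args; by field
  | rewrite [LHS]F_sym12; apply: Fs_args; by field
  | rewrite [LHS]F_sym23; apply: Fs_args; by field
  | rewrite [LHS]F_p13; apply: Fs_args; by field
  | rewrite [LHS]F_p231; apply: Fs_args; by field
  | rewrite [LHS]F_p312; apply: Fs_args; by field ].

Theorem mainTheorem12 (R : realType) (n : nat) :
  (* the group generated by T1, T2 is isomorphic to S_3 *)
  (   exists f : 'S_3 -> (R[i] * R[i] * R[i] -> R[i] * R[i] * R[i]),
     (forall s t, f s =1 f t -> s = t) /\
     (forall s t, f (s * t)%g =1 f s \o f t) /\
     (forall s, gen_T (R:=R) n (f s)) /\
     (forall g, gen_T (R:=R) n g -> exists s, f s =1 g)) /\
  (* the six invariances *)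
  (forall a b c : R[i], Rn_def n a b c ->
     (Rn_def n a b (a - c - n%:R) -> Rn n a b c = Rn n a b (a - c - n%:R)) /\
     (Rn_def n (1 + c - b) (1 + c - a) c ->
        Rn n a b c = Rn n (1 + c - b) (1 + c - a) c) /\
     (Rn_def n (1 + c - b) (1 + c - a) (1 - b - n%:R) ->
        Rn n a b c = Rn n (1 + c - b) (1 + c - a) (1 - b - n%:R)) /\
     (Rn_def n (1 + a - b - c - n%:R) (1 - c - n%:R) (a - c - n%:R) ->
        Rn n a b c = Rn n (1 + a - b - c - n%:R) (1 - c - n%:R) (a - c - n%:R)) /\
     (Rn_def n (1 + a - b - c - n%:R) (1 - c - n%:R) (1 - b - n%:R) ->
        Rn n a b c = Rn n (1 + a - b - c - n%:R) (1 - c - n%:R) (1 - b - n%:R))) /\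
  (* V_n is symmetric in x, y, z *)
  (forall x y z : R[i], Vn_def n x y z ->
     (Vn_def n y x z -> Vn n x y z = Vn n y x z) /\
     (Vn_def n x z y -> Vn n x y z = Vn n x z y) /\
     (Vn_def n z y x -> Vn n x y z = Vn n z y x) /\
     (Vn_def n y z x -> Vn n x y z = Vn n y z x) /\
     (Vn_def n z x y -> Vn n x y z = Vn n z x y)).
Proof.
split.
  exists (@fT R n); split; first exact: fT_inj.
  split; first exact: fT_mul.
  split; first exact: fT_gen.
  exact: fT_surj.
split.
  move=> a b c Hd; split; [|split; [|split; [|split]]] => H;
  rewrite !Rn_F //; fperm.
move=> x y z Hd; rewrite /Vn_def /Vargs /= in Hd.
split; [|split; [|split; [|split]]] => H; rewrite /Vn_def /Vargs /= in H;
rewrite /Vn /Vargs /= !Rn_F //; fperm.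
Qed.
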